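(* Let $A\in\mathbb{R}^{m\times n}$ with $A\geq 0$ and $A^{\dagger}\geq 0$, and let $(U_k^{(i)},V_k^{(i)},E_k)_{k=1}^{p}$, $i=1,2$, be two proper weak regular multisplittings of $A$ (with the same weighting matrices $E_k$) such that $R(E_k)\subseteq R(A^{T})$ for each $k=1,\ldots,p$. If $[U_k^{(1)}]^{\dagger}\geq[U_k^{(2)}]^{\dagger}$ for each $k=1,\ldots,p$, then $\rho(H_1)\leq\rho(H_2)<1$, where $H_i=\sum_{k=1}^{p}E_k[U_k^{(i)}]^{\dagger}V_k^{(i)}$ for $i=1,2$.
   Context: $A^{\dagger}$ denotes the Moore–Penrose inverse, $\rho(\cdot)$ the spectral radius, $R(\cdot)$, $N(\cdot)$ range and null space; inequalities are entrywise. A splitting $A=U-V$ is proper if $R(U)=R(A)$ and $N(U)=N(A)$; a proper splitting is proper weak regular if $U^{\dagger}\geq 0$ and $U^{\dagger}V\geq 0$. A proper weak regular multisplitting of $A$ is a triplet $(U_k,V_k,E_k)_{k=1}^{p}$ where each $A=U_k-V_k$ is a proper weak regular splitting and each $E_k\geq 0$ is an $n\times n$ diagonal matrix with $\sum_{k=1}^{p}E_k=I_n$. *)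

(* Defs.v *)
From HB Require Import structures.
From mathcomp Require Import all_boot all_order all_algebra.
From mathcomp Require complex. Import complex.ComplexField.
From mathcomp Require Import boolp classical_sets reals.
Set Implicit Arguments. Unset Strict Implicit. Unset Printing Implicit Defensive.
Import Order.TTheory GRing.Theory Num.Theory.
Local Open Scope ring_scope.
Local Open Scope classical_set_scope.

Section Defs.
Variable R : realType.

Definition mx_nonneg m n (A : 'M[R]_(m, n)) : Prop := forall i j, 0 <= A i j.
Definition mx_ge m n (A B : 'M[R]_(m, n)) : Prop := forall i j, B i j <= A i j.

(* X is the Moore-Penrose inverse of A (the four Penrose equations; it is unique) *)
Definition is_MP_inverse m n (A : 'M[R]_(m, n)) (X : 'M[R]_(n, m)) : Prop :=
  [/\ A *m X *m A = A, X *m A *m X = X,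
      (A *m X)^T = A *m X & (X *m A)^T = X *m A].

Definition mx_range m n (A : 'M[R]_(m, n)) : set 'cV[R]_m :=
  [set y | exists x : 'cV[R]_n, y = A *m x].
Definition mx_null m n (A : 'M[R]_(m, n)) : set 'cV[R]_n :=
  [set x | A *m x = 0].

Definition proper_splitting m n (A U V : 'M[R]_(m, n)) : Prop :=
  [/\ A = U - V, mx_range U = mx_range A & mx_null U = mx_null A].

Definition proper_weak_regular m n (A U V : 'M[R]_(m, n)) (Ud : 'M[R]_(n, m)) : Prop :=
  [/\ proper_splitting A U V, is_MP_inverse U Ud, mx_nonneg Ud & mx_nonneg (Ud *m V)].

Definition is_diag_nonneg n (E : 'M[R]_n) : Prop :=
  (forall i j, i != j -> E i j = 0) /\ mx_nonneg E.

Definition pwr_multisplitting m n p (A : 'M[R]_(m, n))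
  (U V : 'I_p -> 'M[R]_(m, n)) (Ud : 'I_p -> 'M[R]_(n, m)) (E : 'I_p -> 'M[R]_n) : Prop :=
  [/\ forall k, proper_weak_regular A (U k) (V k) (Ud k),
      forall k, is_diag_nonneg (E k) & \sum_(k < p) E k = 1%:M].

Definition spectral_radius n (H : 'M[R]_n) : R :=
  sup [set complex.ComplexField.Normc.normc z | z in [set z : complex.complex R |
        eigenvalue (map_mx (fun x : R => complex.real_complex R x) H : 'M[complex.complex R]_n) z]].

Definition multisplit_iter m n p (U V : 'I_p -> 'M[R]_(m, n))
  (Ud : 'I_p -> 'M[R]_(n, m)) (E : 'I_p -> 'M[R]_n) : 'M[R]_n :=
  \sum_(k < p) E k *m (Ud k *m V k).
End Defs.

(* Main.v *)
Require Import Defs.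
From HB Require Import structures.
From mathcomp Require Import all_boot all_order all_algebra.
From mathcomp Require complex.
From mathcomp Require Import boolp classical_sets reals.
Import Order.TTheory GRing.Theory Num.Theory.
Import complex complex.ComplexField complex.ComplexField.Normc.
Set Implicit Arguments. Unset Strict Implicit. Unset Printing Implicit Defensive.
Local Open Scope ring_scope.
Local Open Scope classical_set_scope.

Section Analytic.
Variable R : realType.

Definition to0 (f : nat -> R) := forall e, 0 < e -> exists N, forall k, (N <= k)%N -> f k <= e.

Lemma bernoulli (h : R) J : 0 <= h -> 1 + J%:R * h <= (1 + h) ^+ J.
Proof.
move=> h0; elim: J => [|J IH]; first by rewrite mul0r addr0 expr0.
rewrite exprSr; apply: le_trans (_ : (1 + J%:R * h) * (1 + h) <= _); last first.
  by rewrite ler_wpM2r // addr_ge0.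
rewrite mulrDl mul1r mulrDr mulr1 -natr1 mulrDl mul1r addrA.
by rewrite -!addrA lerD2l [_ + h]addrC lerD2l lerDl mulr_ge0 // mulr_ge0.
Qed.

Lemma geo (q K e : R) : 0 <= q -> q < 1 -> 0 < e -> exists J, q ^+ J * K <= e.
Proof.
move=> q0 q1 e0.
have [K0|K0] := lerP K 0; first by exists 0%N; rewrite expr0 mul1r (le_trans K0) // ltW.
have [->|qn0] := eqVneq q 0; first by exists 1%N; rewrite expr1 mul0r ltW.
have qp : 0 < q by rewrite lt_def qn0.
pose h := q^-1 - 1.
have hp : 0 < h by rewrite /h subr_gt0 invf_gt1.
have h1 : 0 < 1 + h by rewrite addr_gt0.
have B0 : 0 <= K / (e * h) by rewrite divr_ge0 // ?ltW // mulr_gt0.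
exists (Num.bound (K / (e * h))).
set J := Num.bound _.
have HJ := archi_boundP B0; rewrite -/J in HJ.
have qinv : q = (1 + h)^-1 by rewrite /h addrC subrK invrK.
have hJ : 0 < (1 + h) ^+ J by rewrite exprn_gt0.
rewrite qinv exprVn mulrC ler_pdivrMr //.
apply: le_trans (_ : e * (1 + J%:R * h) <= _); last first.
  by apply: ler_wpM2l; [exact: ltW | exact: bernoulli (ltW hp)].
apply: le_trans (_ : e * (J%:R * h) <= _); last by apply: ler_wpM2l; [exact: ltW | rewrite lerDr].
by rewrite mulrCA -ler_pdivrMr ?mulr_gt0 // ltW.
Qed.

Lemma RS (b c : nat -> R) (q : R) : (forall k, 0 <= b k) -> 0 <= q -> q < 1 ->
  to0 c -> (forall k, b k.+1 <= q * b k + c k) -> to0 b.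
Proof.
move=> b0 q0 q1 c0 rec e e0.
have e2 : 0 < e / 2 by rewrite divr_gt0.
have d0 : 0 < e / 2 * (1 - q) by rewrite mulr_gt0 // subr_gt0.
have [N HN] := c0 _ d0.
have key : forall j, b (N + j)%N - e / 2 <= q ^+ j * b N.
  elim=> [|j IH]; first by rewrite addn0 expr0 mul1r lerBlDr lerDl ltW.
  rewrite addnS; apply: le_trans (_ : q * (b (N + j)%N - e / 2) <= _).
    rewrite lerBlDr (le_trans (rec _)) //.
    rewrite mulrBr -addrA lerD2l.
    have := HN (N + j)%N (leq_addr _ _).
    by move=> h; rewrite (le_trans h) // mulrBr mulr1 addrC [q * _]mulrC.
  by rewrite exprS -mulrA ler_wpM2l.
have [J HJ] := geo (b N) q0 q1 e2.
exists (N + J)%N => k Nk.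
have -> : k = (N + (k - N))%N by rewrite subnKC // (leq_trans (leq_addr _ _) Nk).
have := key (k - N)%N; rewrite lerBlDr => h; apply: (le_trans h).
rewrite [e in _ <= e](splitr e) lerD2r (le_trans _ HJ) // ler_wpM2r //.
by rewrite ler_wiXn2l // ?ltW // leq_subRL ?(leq_trans (leq_addr _ _) Nk) // addnC.
Qed.

Lemma CS (a : nat -> complex.complex R) z : normc z < 1 ->
  to0 (fun k => normc (a k.+1 - z * a k)) -> to0 (fun k => normc (a k)).
Proof.
move=> z1 h; apply: (RS (q := normc z) (c := fun k => normc (a k.+1 - z * a k))) => //.
- by move=> k; case: (a k) => u v /=; rewrite sqrtr_ge0.
- by case: (z) => u v /=; rewrite sqrtr_ge0.
move=> k; rewrite -normcM; apply: le_trans (complex.le_normcD _ _).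
by rewrite addrC subrK.
Qed.
End Analytic.

Section L.
Variable R : realType.
Local Notation C := (complex.complex R).

Lemma Lconv n (M : 'M[C]_n) : (forall z, eigenvalue M z -> normc z < 1) ->
  forall (x : 'rV_n) j, to0 (fun k => normc ((x *m M ^+ k) 0 j)).
Proof.
case: n M => [|n] M HM x j; first by case: j.
have [rs Hrs] := closed_field_poly_normal (char_poly M).
rewrite (monicP (char_poly_monic _)) scale1r in Hrs.
have CH : \prod_(z <- rs) (M - z%:M) = 0.
  rewrite -(Cayley_Hamilton M) Hrs rmorph_prod; apply: eq_bigr => z _.
  by rewrite rmorphB /= horner_mx_X horner_mx_C.
suff gen : forall (l : seq C) (x : 'rV_n.+1), {in l, forall z, normc z < 1} ->
    (forall j, to0 (fun k => normc ((x *m M ^+ k *m \prod_(z <- l) (M - z%:M)) 0 j))) ->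
    forall j, to0 (fun k => normc ((x *m M ^+ k) 0 j)).
  apply: (gen rs).
    by move=> z zrs; apply: HM; rewrite eigenvalue_root_char Hrs root_prod_XsubC.
  by move=> j' e e0; exists 0%N => k _; rewrite CH mulmx0 mxE normc0 ltW.
elim=> [|z l IH] x0 Hl Hx j'.
  move=> e e0; have [N HN] := Hx j' e e0; exists N => k kN.
  by have := HN k kN; rewrite big_nil mulmx1.
have cz : forall k, (M - z%:M) *m M ^+ k = M ^+ k *m (M - z%:M).
  move=> k; rewrite mulmxE; apply: commrX; apply: commr_sym.
  apply: commrB; [by [] | exact: scalar_mxC].
have IH' := IH (x0 *m (M - z%:M)).
have IH2 := IH' (fun w wl => Hl w (introT orP (or_intror wl))).
have Hz : normc z < 1 by apply: Hl; rewrite inE eqxx.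
apply: (CS (a := fun k => (x0 *m M ^+ k) 0 j') Hz).
have Hx2 : forall i, to0 (fun k => normc ((x0 *m (M - z%:M) *m M ^+ k *m \prod_(z <- l) (M - z%:M)) 0 i)).
  move=> i e e0; have [N HN] := Hx i e e0; exists N => k kN.
  have E : x0 *m (M - z%:M) *m M ^+ k *m \prod_(w <- l) (M - w%:M) =
           x0 *m M ^+ k *m \prod_(w <- z :: l) (M - w%:M).
    by rewrite big_cons -mulmxE -!mulmxA; congr (_ *m _); rewrite !mulmxA cz.
  by rewrite E; apply: HN.
move=> e e0; have [N HN] := IH2 Hx2 j' e e0; exists N => k kN.
have := HN k kN.
rewrite -mulmxA cz mulmxA mulmxBr mul_mx_scalar.
have -> : x0 *m M ^+ k.+1 = x0 *m M ^+ k *m M by rewrite exprSr; apply: mulmxA.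
set X := x0 *m M ^+ k *m M; set Y := x0 *m M ^+ k.
have -> : (X - z *: Y) 0 j' = X 0 j' - z * Y 0 j' by rewrite !mxE.
by [].
Qed.
End L.
Section Spec.
Variable R : realType.
Local Notation C := (complex.complex R).
Local Notation Hc H := (map_mx (fun x : R => complex.real_complex R x) H).

Lemma normc_ge0 (z : C) : 0 <= normc z.
Proof. by case: z => u v /=; rewrite sqrtr_ge0. Qed.

Lemma foldmax_ub (l : seq R) x : x \in l -> x <= foldr Num.max 0 l.
Proof.
elim: l => [//|y l IH]; rewrite inE => /orP[/eqP->|xl] /=; rewrite le_max ?lexx //.
by rewrite IH ?orbT.
Qed.

Lemma foldmax_ge0 (l : seq R) : 0 <= foldr Num.max 0 l.
Proof. by elim: l => [//|y l IH] /=; rewrite le_max IH orbT. Qed.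

Lemma foldmax_lt (l : seq R) c : 0 < c -> (forall x, x \in l -> x < c) -> foldr Num.max 0 l < c.
Proof.
move=> c0; elim: l => [//|y l IH] H /=; rewrite gt_max H ?inE ?eqxx // IH //.
by move=> x xl; rewrite H // inE xl orbT.
Qed.

Definition SS n (H : 'M[R]_n) : set R :=
  [set Normc.normc z | z in [set z : C | eigenvalue (Hc H : 'M[C]_n) z]].

Lemma spec_list n (H : 'M[R]_n) : exists l : seq R, forall x, SS H x <-> x \in l.
Proof.
have [rs Hrs] := closed_field_poly_normal (char_poly (Hc H : 'M[C]_n)).
rewrite (monicP (char_poly_monic _)) scale1r in Hrs.
exists (map (fun z => normc z) rs) => x; split.
  by case=> z /= ez <-; apply: map_f; rewrite -root_prod_XsubC -Hrs -eigenvalue_root_char.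
by case/mapP=> z zrs ->; exists z => //=; rewrite eigenvalue_root_char Hrs root_prod_XsubC.
Qed.

Lemma rho_le_M n (H : 'M[R]_n) l : (forall x, SS H x <-> x \in l) ->
  spectral_radius H <= foldr Num.max 0 l.
Proof.
move=> Hl; rewrite /spectral_radius -/(SS H).
have [[x Sx]|S0] := pselect (exists x, SS H x).
  by apply: ge_sup; [exists x | move=> y /Hl; apply: foldmax_ub].
rewrite sup_out ?foldmax_ge0 // => -[[y Sy] _]; apply: S0; by exists y.
Qed.

Lemma rho_ub n (H : 'M[R]_n) z : eigenvalue (Hc H : 'M[C]_n) z -> normc z <= spectral_radius H.
Proof.
move=> ez; have [l Hl] := spec_list H.
rewrite /spectral_radius -/(SS H); apply: ub_le_sup; last by exists z.
by exists (foldr Num.max 0 l) => y /Hl; apply: foldmax_ub.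
Qed.

Lemma rho_lt n (H : 'M[R]_n) c : 0 < c ->
  (forall z, eigenvalue (Hc H : 'M[C]_n) z -> normc z < c) -> spectral_radius H < c.
Proof.
move=> c0 Hz; have [l Hl] := spec_list H.
apply: le_lt_trans (rho_le_M Hl) _; apply: foldmax_lt => // x /Hl [z /= ez <-].
exact: Hz.
Qed.

Lemma rho_ge0 n (H : 'M[R]_n) : 0 <= spectral_radius H.
Proof.
have [l Hl] := spec_list H; rewrite /spectral_radius -/(SS H).
have [[x Sx]|S0] := pselect (exists x, SS H x).
  case: (Sx) => z ez _; apply: le_trans (normc_ge0 z) _.
  by apply: ub_le_sup; [exists (foldr Num.max 0 l) => y /Hl; apply: foldmax_ub | exists z].
by rewrite sup_out // => -[[y Sy] _]; apply: S0; exists y.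
Qed.

Lemma rho_gt n (H : 'M[R]_n) t : 0 <= t -> t < spectral_radius H ->
  exists2 z, eigenvalue (Hc H : 'M[C]_n) z & t < normc z.
Proof.
move=> t0; rewrite /spectral_radius -/(SS H).
have [[x Sx]|S0] := pselect (exists x, SS H x).
  by move=> /(sup_gt (ex_intro _ x Sx)) [y [z /= ez <-] ty]; exists z.
by rewrite sup_out ?ltNge ?t0 // => -[[y Sy] _]; apply: S0; exists y.
Qed.
End Spec.
Section Mat.
Variable R : realType.

Lemma mx_ext m n (B D : 'M[R]_(m,n)) : (forall x : 'cV_n, B *m x = D *m x) -> B = D.
Proof.
move=> h; apply/matrixP => i j.
have := congr1 (fun c : 'cV_m => c i 0) (h (delta_mx j 0)).
by rewrite -!colE !mxE.
Qed.

Lemma nonneg_mul m n p (A : 'M[R]_(m,n)) (B : 'M_(n,p)) :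
  mx_nonneg A -> mx_nonneg B -> mx_nonneg (A *m B).
Proof. move=> hA hB i j; rewrite mxE; apply: sumr_ge0 => k _; exact: mulr_ge0. Qed.

Lemma nonneg_sum m n p (F : 'I_p -> 'M[R]_(m,n)) :
  (forall k, mx_nonneg (F k)) -> mx_nonneg (\sum_k F k).
Proof. move=> h i j; rewrite summxE; apply: sumr_ge0 => k _; exact: h. Qed.

Lemma ge_mulr m n p (X Y : 'M[R]_(m,n)) (B : 'M_(n,p)) :
  mx_ge Y X -> mx_nonneg B -> mx_ge (Y *m B) (X *m B).
Proof. move=> h hB i j; rewrite !mxE; apply: ler_sum => k _; exact: ler_wpM2r. Qed.

Lemma ge_mull m n p (A : 'M[R]_(m,n)) (X Y : 'M_(n,p)) :
  mx_nonneg A -> mx_ge Y X -> mx_ge (A *m Y) (A *m X).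
Proof. move=> hA h i j; rewrite !mxE; apply: ler_sum => k _; exact: ler_wpM2l. Qed.

Variables (m n : nat) (A : 'M[R]_(m,n)) (Ad : 'M[R]_(n,m)).

Lemma AdA_id p (E : 'I_p -> 'M[R]_n) : is_MP_inverse A Ad -> \sum_(k < p) E k = 1%:M ->
  (forall k, mx_range (E k) `<=` mx_range A^T) -> Ad *m A = 1%:M.
Proof.
case=> P1 P2 P3 P4 sE rE.
have AAT : Ad *m A *m A^T = A^T by rewrite -{1}P4 -trmx_mul mulmxA P1.
have hk : forall k, Ad *m A *m E k = E k.
  move=> k; apply: mx_ext => x.
  have [y hy] : mx_range A^T (E k *m x) by apply: rE; exists x.
  by rewrite -(mulmxA (Ad *m A)) hy mulmxA AAT.
transitivity (Ad *m A *m \sum_(k < p) E k); first by rewrite sE mulmx1.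
by rewrite mulmx_sumr -sE; apply: eq_bigr => k _; exact: hk.
Qed.

Lemma UdU_id (U V : 'M[R]_(m,n)) Ud : Ad *m A = 1%:M ->
  proper_weak_regular A U V Ud -> Ud *m U = 1%:M.
Proof.
move=> AdA [[AUV RU NU] [Q1 Q2 Q3 Q4] _ _].
apply: mx_ext => x; rewrite mul1mx.
set z := Ud *m U *m x - x.
have Uz : mx_null U z.
  by rewrite /mx_null /mkset /z mulmxBr !mulmxA Q1 subrr.
rewrite NU /mx_null /mkset in Uz.
have : z = 0 by rewrite -[z]mul1mx -AdA -mulmxA Uz mulmx0.
by move/eqP; rewrite subr_eq0 => /eqP.
Qed.

Lemma UdAAd (U V : 'M[R]_(m,n)) Ud : is_MP_inverse A Ad ->
  proper_weak_regular A U V Ud -> Ud *m A *m Ad = Ud.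
Proof.
move=> [P1 P2 P3 P4] [[AUV RU NU] [Q1 Q2 Q3 Q4] _ _].
have PU : A *m Ad *m U = U.
  apply: mx_ext => x.
  have [y hy] : mx_range A (U *m x) by rewrite -RU; exists x.
  by rewrite -(mulmxA (A *m Ad)) hy mulmxA P1.
have UT : U^T = U^T *m (A *m Ad) by rewrite -{1}PU trmx_mul P3.
transitivity (Ud *m (U *m Ud)^T *m (A *m Ad)); first by rewrite Q3 [Ud *m (U *m Ud)]mulmxA Q2 mulmxA.
by rewrite trmx_mul -mulmxA -(mulmxA Ud^T) -UT -trmx_mul Q3 mulmxA Q2.
Qed.

Lemma H_formula p (U V : 'I_p -> 'M[R]_(m,n)) Ud (E : 'I_p -> 'M[R]_n) :
  Ad *m A = 1%:M -> pwr_multisplitting A U V Ud E ->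
  multisplit_iter U V Ud E = 1%:M - (\sum_k E k *m Ud k) *m A.
Proof.
move=> AdA [hk _ sE].
rewrite /multisplit_iter mulmx_suml -sE -sumrB; apply: eq_bigr => k _.
have UdU := UdU_id AdA (hk k).
have [[AUV _ _] _ _ _] := hk k.
have -> : V k = U k - A by rewrite AUV opprB addrC subrK.
by rewrite mulmxBr UdU mulmxBr mulmx1 mulmxA.
Qed.

End Mat.

Lemma partial (R : realType) n m (H : 'M[R]_n) (M Ad : 'M[R]_(n,m)) :
  H *m Ad = Ad - M -> forall k, (\sum_(j < k) H ^+ j) *m M = Ad - H ^+ k *m Ad.
Proof.
move=> HAd; elim=> [|k IH]; first by rewrite big_ord0 mul0mx expr0 mul1mx subrr.
rewrite big_ord_recr /= mulmxDl IH exprSr -mulmxE -mulmxA HAd mulmxBr.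
by rewrite opprB addrA addrAC.
Qed.

Section Eig.
Variable R : realType.
Local Notation C := (complex.complex R).
Local Notation Hc H := (map_mx (fun x : R => complex.real_complex R x) H).

Lemma normc_real (t : R) : normc (complex.real_complex R t) = `|t|.
Proof. by rewrite /normc /= expr0n /= addr0 sqrtr_sqr. Qed.

Lemma eig_abs n (H : 'M[R]_n) (l : C) (w : 'rV[C]_n) : mx_nonneg H ->
  w *m Hc H = l *: w ->
  mx_ge ((\row_i normc (w 0 i)) *m H) (normc l *: \row_i normc (w 0 i)).
Proof.
move=> hH hw i j; rewrite (ord1 i) {i}.
have e1 : (normc l *: \row_i normc (w 0 i)) 0 j = normc (l * w 0 j).
  by rewrite !mxE normcM.
have e2 : l * w 0 j = (w *m Hc H) 0 j by rewrite hw mxE.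
rewrite e1 e2 mxE [X in _ <= X]mxE.
apply: (big_ind2 (fun a b => normc a <= b)).
- by rewrite normc0.
- by move=> a1 b1 a2 b2 h1 h2; apply: le_trans (complex.le_normcD _ _) (lerD h1 h2).
- by move=> k _; rewrite !mxE normcM normc_real ger0_norm.
Qed.

Lemma row_nz n (w : 'rV[C]_n) : w != 0 -> exists j, 0 < normc (w 0 j).
Proof.
move=> wn0; case: (pselect (exists j, w 0 j != 0)) => [[j hj]|h].
  exists j; rewrite lt_def normc_ge0 andbT; apply/eqP => /eq0_normc /eqP.
  by rewrite (negbTE hj).
case/eqP: wn0; apply/matrixP => i j; rewrite (ord1 i) mxE.
by case: (eqVneq (w 0 j) 0) => // hj; exfalso; apply: h; exists j.
Qed.
End Eig.

Section Main.
Variable R : realType.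
Local Notation C := (complex.complex R).
Local Notation Hc H := (map_mx (fun x : R => complex.real_complex R x) H).

Lemma ge_sub m n (X Y Z : 'M[R]_(m,n)) : mx_ge Y X -> mx_ge (Z - X) (Z - Y).
Proof. by move=> h i j; rewrite !mxE lerD2l lerN2. Qed.

Lemma pow_nonneg n (H : 'M[R]_n) k : mx_nonneg H -> mx_nonneg (H ^+ k).
Proof.
move=> hH; elim: k => [|k IH]; first by move=> i j; rewrite expr0 mxE ler0n.
by rewrite exprSr; apply: nonneg_mul.
Qed.

Lemma rho_lt1 n m p (H : 'M[R]_n) (M Ad : 'M[R]_(n,m)) (E : 'I_p -> 'M[R]_n)
  (U : 'I_p -> 'M[R]_(m,n)) (Ud : 'I_p -> 'M[R]_(n,m)) :
  mx_nonneg H -> mx_nonneg Ad -> H *m Ad = Ad - M -> M = \sum_k E k *m Ud k ->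
  (forall k, mx_nonneg (E k)) -> (forall k, mx_nonneg (Ud k)) ->
  (forall k, Ud k *m U k = 1%:M) -> \sum_k E k = 1%:M -> spectral_radius H < 1.
Proof.
move=> Hnn Adnn HAd ME Enn Udnn UdU sE.
have Mnn : mx_nonneg M by rewrite ME; apply: nonneg_sum => k; apply: nonneg_mul.
apply: rho_lt => // l /eigenvalueP [w hw wn0].
set x := \row_i normc (w 0 i).
have hx := eig_abs Hnn hw; rewrite -/x in hx.
set r := normc l in hx *.
rewrite ltNge; apply/negP => r1.
have x0 : mx_nonneg x by move=> i j; rewrite mxE normc_ge0.
have pow : forall k, mx_ge (x *m H ^+ k) (r ^+ k *: x).
  elim=> [|k IH] i j; first by rewrite expr0 scale1r mulmx1.
  have -> : x *m H ^+ k.+1 = x *m H ^+ k *m H by rewrite exprSr; apply: mulmxA.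
  apply: le_trans _ (ge_mulr IH Hnn i j).
  rewrite -scalemxAl [X in _ <= X]mxE exprSr -scalerA [X in X <= _]mxE.
  by apply: ler_wpM2l; [rewrite exprn_ge0 // normc_ge0 | exact: hx].
have [i0 xi0] : exists i, 0 < (x *m M) 0 i.
  case: (pselect (exists i, 0 < (x *m M) 0 i)) => // hno; exfalso.
  have xM0 : forall i, (x *m M) 0 i = 0.
    move=> i; apply/eqP; rewrite eq_le (nonneg_mul x0 Mnn) andbT leNgt.
    by apply/negP => h; apply: hno; exists i.
  have each : forall k, x *m E k *m Ud k = 0.
    move=> k; apply/matrixP => i j; rewrite (ord1 i) [RHS]mxE.
    have := xM0 j; rewrite ME mulmx_sumr summxE => /psumr_eq0P h.
    rewrite -mulmxA; apply: h => // k' _.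
    by apply: nonneg_mul => //; apply: nonneg_mul.
  have xE : forall k, x *m E k = 0.
    by move=> k; rewrite -[x *m E k]mulmx1 -(UdU k) mulmxA each mul0mx.
  have : x = 0 by rewrite -[x]mulmx1 -sE mulmx_sumr big1.
  have [j xj] := row_nz wn0.
  by move/matrixP/(_ 0 j); rewrite !mxE => h; rewrite h ltxx in xj.
have bnd : forall k, (\sum_(j < k) r ^+ j) * (x *m M) 0 i0 <= (x *m Ad) 0 i0.
  move=> k.
  have e1 : x *m (\sum_(j < k) H ^+ j) *m M = x *m Ad - x *m H ^+ k *m Ad.
    by rewrite -mulmxA (partial HAd) mulmxBr mulmxA.
  apply: le_trans (_ : (x *m (\sum_(j < k) H ^+ j) *m M) 0 i0 <= _).
    rewrite mulmx_sumr mulmx_suml summxE mulr_suml; apply: ler_sum => j _.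
    have := ge_mulr (pow j) Mnn 0 i0.
    by rewrite -scalemxAl [X in X <= _ -> _]mxE.
  rewrite e1 [X in X <= _]mxE [X in _ + X <= _]mxE gerDl oppr_le0.
  by apply: nonneg_mul => //; apply: nonneg_mul => //; apply: pow_nonneg.
have d0 : 0 <= (x *m Ad) 0 i0 by apply: nonneg_mul.
have q0 : 0 <= (x *m Ad) 0 i0 / (x *m M) 0 i0 by rewrite divr_ge0 // ltW.
have hk := archi_boundP q0.
set k := Num.bound _ in hk.
have sk : k%:R <= \sum_(j < k) r ^+ j.
  apply: le_trans (_ : \sum_(j < k) (1:R) <= _); first by rewrite sumr_const card_ord.
  by apply: ler_sum => j _; apply: exprn_ege1.
have : k%:R <= (x *m Ad) 0 i0 / (x *m M) 0 i0.
  rewrite ler_pdivlMr //; apply: le_trans (bnd k).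
  by apply: ler_wpM2r; [exact: ltW | exact: sk].
by rewrite leNgt hk.
Qed.
End Main.

Section Mono.
Variable R : realType.
Local Notation C := (complex.complex R).
Local Notation Hc H := (map_mx (fun x : R => complex.real_complex R x) H).

Lemma map_pow n (x : 'rV[R]_n) (G : 'M[R]_n) k :
  Hc x *m (Hc G) ^+ k = Hc (x *m G ^+ k).
Proof.
elim: k => [|k IH]; first by rewrite !expr0 !mulmx1.
have -> : Hc x *m (Hc G) ^+ k.+1 = Hc x *m (Hc G) ^+ k *m Hc G.
  by rewrite exprSr; apply: mulmxA.
have -> : x *m G ^+ k.+1 = x *m G ^+ k *m G by rewrite exprSr; apply: mulmxA.
by rewrite IH; symmetry; apply: (map_mxM (complex.real_complex R)).
Qed.

Lemma rho_mono n (H1 H2 : 'M[R]_n) : mx_nonneg H1 -> mx_nonneg H2 -> mx_ge H2 H1 ->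
  spectral_radius H1 <= spectral_radius H2.
Proof.
move=> H1nn H2nn H12.
rewrite leNgt; apply/negP => lt.
have [l el rl] := rho_gt (rho_ge0 H2) lt.
set r := normc l in rl.
have r0 : 0 < r := le_lt_trans (rho_ge0 _) rl.
case/eigenvalueP: el => w hw wn0.
set x := \row_i normc (w 0 i).
have x0 : mx_nonneg x by move=> i j; rewrite mxE normc_ge0.
have hx := eig_abs H1nn hw; rewrite -/x -/r in hx.
have hx2 : mx_ge (x *m H2) (r *: x).
  by move=> i j; apply: le_trans (hx i j) (ge_mull x0 H12 i j).
set G := r^-1 *: H2.
have Gnn : mx_nonneg G by move=> i j; rewrite mxE mulr_ge0 // invr_ge0 ltW.
have hxG : mx_ge (x *m G) x.
  move=> i j; rewrite -scalemxAr [X in _ <= X]mxE ler_pdivlMl //.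
  by have := hx2 i j; rewrite [X in X <= _ -> _]mxE.
have pow : forall k, mx_ge (x *m G ^+ k) x.
  elim=> [|k IH] i j; first by rewrite expr0 mulmx1.
  have -> : x *m G ^+ k.+1 = x *m G ^+ k *m G by rewrite exprSr; apply: mulmxA.
  apply: le_trans (hxG i j) _.
  exact: (ge_mulr IH Gnn i j).
have HG : Hc G = (complex.real_complex R r^-1) *: Hc H2.
  by apply/matrixP => a b; rewrite !mxE /= rmorphM.
have hG : forall mu, eigenvalue (Hc G : 'M[C]_n) mu -> normc mu < 1.
  move=> mu /eigenvalueP [v hv vn0].
  have ev : eigenvalue (Hc H2 : 'M[C]_n) (complex.real_complex R r * mu).
    apply/eigenvalueP; exists v => //.
    have rr : r / r = 1 by apply: mulfV; rewrite gt_eqF.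
    by rewrite -scalerA -hv HG -scalemxAr scalerA -rmorphM rr rmorph1 scale1r.
  have h := rho_ub ev. rewrite normcM normc_real ger0_norm in h; last exact: ltW.
  by rewrite -(ltr_pM2l r0) mulr1 (le_lt_trans h).
have [j xj] := row_nz wn0.
have xj' : 0 < x 0 j by rewrite mxE.
have e0 : 0 < x 0 j / 2 by rewrite divr_gt0.
have [N HN] := Lconv hG (Hc x) j e0.
have := HN N (leqnn N); rewrite map_pow mxE normc_real ger0_norm; last first.
  by apply: nonneg_mul => //; apply: pow_nonneg.
move=> h; have := le_trans (pow N 0 j) h.
rewrite ler_pdivlMr // => h2.
have h3 : x 0 j < x 0 j * 2 by rewrite ltr_pMr // ltr1n.
by have := le_lt_trans h2 h3; rewrite ltxx.
Qed.
End Mono.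

Theorem theorem5p13 (R : realType) (m n p : nat)
  (A : 'M[R]_(m, n)) (Ad : 'M[R]_(n, m))
  (U1 V1 U2 V2 : 'I_p -> 'M[R]_(m, n)) (U1d U2d : 'I_p -> 'M[R]_(n, m))
  (E : 'I_p -> 'M[R]_n) :
  mx_nonneg A -> is_MP_inverse A Ad -> mx_nonneg Ad ->
  pwr_multisplitting A U1 V1 U1d E ->
  pwr_multisplitting A U2 V2 U2d E ->
  (forall k, mx_range (E k) `<=` mx_range A^T) ->
  (forall k, mx_ge (U1d k) (U2d k)) ->
  spectral_radius (multisplit_iter U1 V1 U1d E)
    <= spectral_radius (multisplit_iter U2 V2 U2d E)
  /\ spectral_radius (multisplit_iter U2 V2 U2d E) < 1.
Proof.
move=> A0 MP Ad0 hs1 hs2 rE ge12.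
have [hk1 hE sE] := hs1; have [hk2 _ _] := hs2.
have AdA := AdA_id MP sE rE.
have H1E := H_formula AdA hs1; have H2E := H_formula AdA hs2.
have Enn : forall k, mx_nonneg (E k) by move=> k; case: (hE k).
have Hnn : forall (U V : 'I_p -> 'M[R]_(m, n)) (Ud : 'I_p -> 'M[R]_(n, m)),
    (forall k, proper_weak_regular A (U k) (V k) (Ud k)) ->
    mx_nonneg (multisplit_iter U V Ud E).
  move=> U V Ud hk; rewrite /multisplit_iter; apply: nonneg_sum => k.
  by apply: nonneg_mul => //; case: (hk k).
have MAAd : (\sum_k E k *m U2d k) *m A *m Ad = \sum_k E k *m U2d k.
  rewrite !mulmx_suml; apply: eq_bigr => k _.
  by rewrite -!mulmxA (mulmxA (U2d k)) (UdAAd MP (hk2 k)).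
split.
  apply: rho_mono; [exact: Hnn | exact: Hnn | ].
  rewrite H1E H2E; apply: ge_sub; apply: ge_mulr => //.
  move=> i j; rewrite !summxE; apply: ler_sum => k _; exact: (ge_mull (Enn k) (ge12 k) i j).
apply: (rho_lt1 (M := \sum_k E k *m U2d k) (Ad := Ad) (E := E) (U := U2) (Ud := U2d)).
- exact: Hnn.
- exact: Ad0.
- by rewrite H2E mulmxBl mul1mx MAAd.
- by [].
- exact: Enn.
- by move=> k; case: (hk2 k).
- by move=> k; exact: UdU_id AdA (hk2 k).
- exact: sE.
Qed.
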